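(* Let $A$ be a sequence algebra and $P$ a homogeneous normed $A$-module of finite type such that for every $n\in\mathbb N$ the coordinate subspace $P_n$ is isometrically isomorphic to $l_1^0(\Lambda_n)$ for some index set $\Lambda_n$. Then $P$ is extremely projective with respect to $\mathcal H$.
   Context: All normed algebras and modules are contractive ($\|ab\|\le\|a\|\|b\|$, $\|a\cdot x\|\le\|a\|\|x\|$), not necessarily complete; morphisms are bounded $A$-module maps. A morphism $\tau:Y\to X$ is coisometric if $\|\tau\|\le1$ and for every $x\in X$, $\varepsilon>0$ there is $y$ with $\tau(y)=x$, $\|y\|<\|x\|+\varepsilon$. $P$ is extremely projective with respect to a full subcategory $\mathcal K$ if for every coisometric morphism $\tau:Y\to X$ with $X,Y\in\mathcal K$, every bounded morphism $\varphi:P\to X$ and $\varepsilon>0$ there is a morphism $\psi:P\to Y$ with $\tau\psi=\varphi$ and $\|\psi\|<\|\varphi\|+\varepsilon$. $l_1^0(\Lambda)$: finitely supported functions on $\Lambda$ with the $l_1$-norm. A sequence algebra is a normed algebra of complex sequences with coordinatewise operations containing $c_{00}$ as a dense subalgebra, with $\|\mathbf p^n\|=1$, where $\mathbf p^n$ has $1$ in place $n$ and $0$ elsewhere. $x_n:=\mathbf p^n\cdot x$, $X_n:=\{\mathbf p^n\cdot x\}$. Essential: closed span of $\{a\cdot x\}$ is $X$. Homogeneous: $\|x_n\|\le\|y_n\|$ for all $n$ implies $\|x\|\le\|y\|$. Finite type: for each $x$, $x_n=0$ for large $n$. $\mathcal H$ is the full subcategory of essential homogeneous normed $A$-modules. 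*)

(* Defs.v *)
From Stdlib Require Import Reals List.
Open Scope R_scope.

Record C := mkC { re : R; im : R }.
Definition C0 : C := mkC 0 0.
Definition C1 : C := mkC 1 0.
Definition Cadd (a b : C) : C := mkC (re a + re b) (im a + im b).
Definition Copp (a : C) : C := mkC (- re a) (- im a).
Definition Cmul (a b : C) : C :=
  mkC (re a * re b - im a * im b) (re a * im b + im a * re b).
Definition Cmod (a : C) : R := sqrt (re a * re a + im a * im a).

Definition cseq := nat -> C.
Definition sadd (a b : cseq) : cseq := fun k => Cadd (a k) (b k).
Definition sopp (a : cseq) : cseq := fun k => Copp (a k).
Definition smul (a b : cseq) : cseq := fun k => Cmul (a k) (b k).
Definition sscal (c : C) (a : cseq) : cseq := fun k => Cmul c (a k).
Definition in_c00 (a : cseq) : Prop := exists N, forall k, (N <= k)%nat -> a k = C0.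
Definition pvec (n : nat) : cseq := fun k => if Nat.eqb k n then C1 else C0.

Record SeqAlg := {
  inA : cseq -> Prop;
  nA : cseq -> R;
  inA_add : forall a b, inA a -> inA b -> inA (sadd a b);
  inA_scal : forall c a, inA a -> inA (sscal c a);
  inA_mul : forall a b, inA a -> inA b -> inA (smul a b);
  inA_c00 : forall a, in_c00 a -> inA a;
  nA_nonneg : forall a, inA a -> 0 <= nA a;
  nA_zero : forall a, inA a -> nA a = 0 -> a = (fun _ => C0);
  nA_triangle : forall a b, inA a -> inA b -> nA (sadd a b) <= nA a + nA b;
  nA_scal : forall c a, inA a -> nA (sscal c a) = Cmod c * nA a;
  nA_submult : forall a b, inA a -> inA b -> nA (smul a b) <= nA a * nA b;
  c00_dense : forall a eps, inA a -> 0 < eps ->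
      exists b, in_c00 b /\ nA (sadd a (sopp b)) < eps;
  nA_pvec : forall n, nA (pvec n) = 1
}.

Record NMod (A : SeqAlg) := {
  car :> Type;
  mzero : car;
  madd : car -> car -> car;
  mopp : car -> car;
  mscal : C -> car -> car;
  mnorm : car -> R;
  act : cseq -> car -> car;
  madd_assoc : forall x y z, madd x (madd y z) = madd (madd x y) z;
  madd_comm : forall x y, madd x y = madd y x;
  madd_0 : forall x, madd mzero x = x;
  madd_opp : forall x, madd x (mopp x) = mzero;
  mscal_1 : forall x, mscal C1 x = x;
  mscal_mul : forall a b x, mscal a (mscal b x) = mscal (Cmul a b) x;
  mscal_addl : forall a b x, mscal (Cadd a b) x = madd (mscal a x) (mscal b x);
  mscal_addr : forall a x y, mscal a (madd x y) = madd (mscal a x) (mscal a y);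
  mnorm_nonneg : forall x, 0 <= mnorm x;
  mnorm_zero : forall x, mnorm x = 0 -> x = mzero;
  mnorm_triangle : forall x y, mnorm (madd x y) <= mnorm x + mnorm y;
  mnorm_scal : forall c x, mnorm (mscal c x) = Cmod c * mnorm x;
  act_addr : forall a x y, inA A a -> act a (madd x y) = madd (act a x) (act a y);
  act_scalr : forall a c x, inA A a -> act a (mscal c x) = mscal c (act a x);
  act_addl : forall a b x, inA A a -> inA A b -> act (sadd a b) x = madd (act a x) (act b x);
  act_scall : forall a c x, inA A a -> act (sscal c a) x = mscal c (act a x);
  act_mul : forall a b x, inA A a -> inA A b -> act (smul a b) x = act a (act b x);
  act_contr : forall a x, inA A a -> mnorm (act a x) <= nA A a * mnorm x
}.

Arguments mzero {A X} : rename.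
Arguments madd {A X} : rename.
Arguments mopp {A X} : rename.
Arguments mscal {A X} : rename.
Arguments mnorm {A X} : rename.
Arguments act {A X} : rename.

Definition is_morph {A : SeqAlg} {X Y : NMod A} (f : X -> Y) : Prop :=
  (forall x y, f (madd x y) = madd (f x) (f y)) /\
  (forall c x, f (mscal c x) = mscal c (f x)) /\
  (forall a x, inA A a -> f (act a x) = act a (f x)) /\
  (exists M, forall x, mnorm (f x) <= M * mnorm x).

Definition opnorm {A : SeqAlg} {X Y : NMod A} (f : X -> Y) (r : R) : Prop :=
  is_lub (fun t => exists x, mnorm x <= 1 /\ t = mnorm (f x)) r.

Definition coisometric {A : SeqAlg} {X Y : NMod A} (tau : Y -> X) : Prop :=
  is_morph tau /\
  (exists r, opnorm tau r /\ r <= 1) /\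
  (forall x eps, 0 < eps -> exists y, tau y = x /\ mnorm y < mnorm x + eps).

Definition extremely_projective {A : SeqAlg} (K : NMod A -> Prop) (P : NMod A) : Prop :=
  forall (X Y : NMod A), K X -> K Y ->
  forall tau : Y -> X, coisometric tau ->
  forall phi : P -> X, is_morph phi ->
  forall eps, 0 < eps ->
  exists psi : P -> Y, is_morph psi /\ (forall x, tau (psi x) = phi x) /\
    (forall r, opnorm phi r -> exists r', opnorm psi r' /\ r' < r + eps).

Inductive in_span {A : SeqAlg} {X : NMod A} (S : X -> Prop) : X -> Prop :=
| span_0 : in_span S mzero
| span_S : forall x, S x -> in_span S x
| span_add : forall x y, in_span S x -> in_span S y -> in_span S (madd x y)
| span_scal : forall c x, in_span S x -> in_span S (mscal c x).

Definition essential {A : SeqAlg} (X : NMod A) : Prop :=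
  forall (x : X) eps, 0 < eps ->
  exists y, in_span (fun z : X => exists a w, inA A a /\ z = act a w) y /\
            mnorm (madd x (mopp y)) < eps.

Definition homogeneous {A : SeqAlg} (X : NMod A) : Prop :=
  forall x y : X, (forall n, mnorm (act (pvec n) x) <= mnorm (act (pvec n) y)) ->
  mnorm x <= mnorm y.

Definition finite_type {A : SeqAlg} (X : NMod A) : Prop :=
  forall x : X, exists N, forall n, (N <= n)%nat -> act (pvec n) x = mzero.

Definition cat_H {A : SeqAlg} (X : NMod A) : Prop := essential X /\ homogeneous X.

Definition coord_sub {A : SeqAlg} (X : NMod A) (n : nat) (y : X) : Prop :=
  exists x, y = act (pvec n) x.

Definition finsupp {L : Type} (f : L -> C) : Prop :=
  exists l : list L, forall i, f i <> C0 -> In i l.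
Definition l1norm {L : Type} (f : L -> C) (r : R) : Prop :=
  exists l : list L, NoDup l /\ (forall i, f i <> C0 -> In i l) /\
    r = fold_right Rplus 0 (map (fun i => Cmod (f i)) l).

Definition iso_l10 {A : SeqAlg} (X : NMod A) (Y : X -> Prop) (L : Type) : Prop :=
  exists T : (L -> C) -> X,
    (forall f, finsupp f -> Y (T f)) /\
    (forall f g, finsupp f -> finsupp g ->
        T (fun i => Cadd (f i) (g i)) = madd (T f) (T g)) /\
    (forall c f, finsupp f -> T (fun i => Cmul c (f i)) = mscal c (T f)) /\
    (forall f r, finsupp f -> l1norm f r -> mnorm (T f) = r) /\
    (forall y, Y y -> exists f, finsupp f /\ T f = y).

(* Main.v *)
Require Import Defs.
From Stdlib Require Import Reals List Lra Classical ClassicalEpsilon FunctionalExtensionality Arith Lia.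
Import Defs.
Open Scope R_scope.

Lemma C_ext (a b : C) : re a = re b -> im a = im b -> a = b.
Proof. destruct a, b; simpl; intros; subst; reflexivity. Qed.

Ltac ceq := apply C_ext; simpl; ring.

Lemma Cmod_real r : Cmod (mkC r 0) = Rabs r.
Proof. unfold Cmod; simpl. rewrite Rmult_0_l, Rplus_0_r. apply sqrt_Rsqr_abs. Qed.

Lemma Cmod_C0 : Cmod C0 = 0.
Proof. unfold C0. rewrite Cmod_real. apply Rabs_R0. Qed.

Lemma Cmod_C1 : Cmod C1 = 1.
Proof. unfold C1. rewrite Cmod_real. apply Rabs_R1. Qed.

Lemma Cmod_nonneg c : 0 <= Cmod c.
Proof. unfold Cmod. apply sqrt_pos. Qed.

Lemma Cmod_eq0 c : Cmod c = 0 -> c = C0.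
Proof. unfold Cmod. intro H. apply sqrt_eq_0 in H; [|nra].
  apply C_ext; simpl; nra. Qed.


Lemma add_cancel {A} {M : NMod A} (x y z : M) : madd x y = madd x z -> y = z.
Proof.
  intro H. assert (Hy: madd (mopp x) (madd x y) = y).
  { rewrite madd_assoc, (madd_comm _ _ (mopp x) x), madd_opp, madd_0. reflexivity. }
  assert (Hz: madd (mopp x) (madd x z) = z).
  { rewrite madd_assoc, (madd_comm _ _ (mopp x) x), madd_opp, madd_0. reflexivity. }
  rewrite <- Hy, <- Hz, H. reflexivity.
Qed.

Lemma madd_0r {A} {M : NMod A} (x : M) : madd x mzero = x.
Proof. rewrite madd_comm. apply madd_0. Qed.

Lemma self_zero {A} {M : NMod A} (x : M) : x = madd x x -> x = mzero.
Proof. intro H. symmetry. apply (add_cancel x). rewrite madd_0r. exact H. Qed.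

Lemma mscal_C0 {A} {M : NMod A} (x : M) : mscal C0 x = mzero.
Proof. apply self_zero. rewrite <- mscal_addl. f_equal. ceq. Qed.

Lemma mscal_0 {A} {M : NMod A} c : mscal c (@mzero A M) = mzero.
Proof. rewrite <- (mscal_C0 mzero), mscal_mul. replace (Cmul c C0) with C0 by ceq.
  reflexivity. Qed.

Lemma mnorm_0 {A} {M : NMod A} : mnorm (@mzero A M) = 0.
Proof. rewrite <- (mscal_C0 mzero), mnorm_scal, Cmod_C0. ring. Qed.

Lemma act_0 {A} {M : NMod A} a : inA A a -> act a (@mzero A M) = mzero.
Proof. intro Ha. rewrite <- (mscal_C0 mzero) at 1. rewrite act_scalr by exact Ha. apply mscal_C0. Qed.

Definition mneg {A} {M : NMod A} (x : M) : M := mscal (mkC (-1) 0) x.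

Lemma mneg_r {A} {M : NMod A} (x : M) : madd x (mneg x) = mzero.
Proof. unfold mneg. rewrite <- (mscal_1 _ _ x) at 1. rewrite <- mscal_addl.
  replace (Cadd C1 (mkC (-1) 0)) with C0 by ceq. apply mscal_C0. Qed.

Lemma morph_0 {A} {X Y : NMod A} (f : X -> Y) :
  (forall x y, f (madd x y) = madd (f x) (f y)) -> f mzero = mzero.
Proof. intro H. apply self_zero. rewrite <- H, madd_0. reflexivity. Qed.

Lemma pvec_in A n : inA A (pvec n).
Proof. apply inA_c00. exists (S n). intros k Hk. unfold pvec.
  destruct (Nat.eqb_spec k n); [lia|reflexivity]. Qed.

Lemma pp_same {A} {M : NMod A} n (x : M) : act (pvec n) (act (pvec n) x) = act (pvec n) x.
Proof. rewrite <- act_mul by apply pvec_in. f_equal. apply functional_extensionality.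
  intro k. unfold smul, pvec. destruct (Nat.eqb k n); ceq. Qed.

Lemma pp_diff {A} {M : NMod A} m n (x : M) : m <> n -> act (pvec m) (act (pvec n) x) = mzero.
Proof. intro Hmn. rewrite <- act_mul by apply pvec_in.
  replace (smul (pvec m) (pvec n)) with (sscal C0 (pvec n)).
  - rewrite act_scall by apply pvec_in. apply mscal_C0.
  - apply functional_extensionality. intro k. unfold smul, sscal, pvec.
    destruct (Nat.eqb_spec k m), (Nat.eqb_spec k n); try lia; ceq. Qed.

Lemma p_a {A} {M : NMod A} m a (x : M) : inA A a ->
  act (pvec m) (act a x) = mscal (a m) (act (pvec m) x).
Proof. intro Ha. rewrite <- act_mul by (apply pvec_in || exact Ha).
  replace (smul (pvec m) a) with (sscal (a m) (pvec m)).
  - apply act_scall. apply pvec_in.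
  - apply functional_extensionality. intro k. unfold smul, sscal, pvec.
    destruct (Nat.eqb_spec k m); [subst; ceq | ceq]. Qed.

Lemma a_p {A} {M : NMod A} m a (x : M) : inA A a ->
  act a (act (pvec m) x) = mscal (a m) (act (pvec m) x).
Proof. intro Ha. rewrite <- act_mul by (apply pvec_in || exact Ha).
  replace (smul a (pvec m)) with (sscal (a m) (pvec m)).
  - apply act_scall. apply pvec_in.
  - apply functional_extensionality. intro k. unfold smul, sscal, pvec.
    destruct (Nat.eqb_spec k m); [subst; ceq | ceq]. Qed.

Lemma pnorm {A} {M : NMod A} n (x : M) : mnorm (act (pvec n) x) <= mnorm x.
Proof. pose proof (act_contr _ M (pvec n) x (pvec_in A n)). rewrite nA_pvec in H. lra. Qed.

Lemma homog_eq {A} {M : NMod A} (x y : M) : homogeneous M ->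
  (forall n, act (pvec n) x = act (pvec n) y) -> x = y.
Proof.
  intros Hh H.
  assert (Hz : madd x (mneg y) = mzero).
  { apply mnorm_zero. apply Rle_antisym; [|apply mnorm_nonneg].
    rewrite <- (@mnorm_0 A M). apply Hh. intro n.
    rewrite act_addr by apply pvec_in. unfold mneg. rewrite act_scalr by apply pvec_in.
    rewrite H. fold (mneg (act (pvec n) y)). rewrite mneg_r, act_0 by apply pvec_in.
    rewrite mnorm_0. lra. }
  transitivity (madd x (madd (mneg y) y)).
  - rewrite (madd_comm _ _ (mneg y) y), mneg_r, madd_0r. reflexivity.
  - rewrite madd_assoc, Hz, madd_0. reflexivity.
Qed.

Definition lsum {A} {M : NMod A} {L : Type} (g : L -> M) (l : list L) : M :=
  fold_right (fun a s => madd (g a) s) mzero l.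

Lemma lsum_ext {A} {M : NMod A} {L} (g h : L -> M) l :
  (forall a, In a l -> g a = h a) -> lsum g l = lsum h l.
Proof. induction l; simpl; intros; [reflexivity|]. rewrite H by auto. f_equal. auto. Qed.

Lemma lsum_add {A} {M : NMod A} {L} (g h : L -> M) l :
  lsum (fun a => madd (g a) (h a)) l = madd (lsum g l) (lsum h l).
Proof. induction l; simpl. { rewrite madd_0. reflexivity. }
  rewrite IHl. rewrite !madd_assoc. f_equal.
  rewrite <- !madd_assoc. f_equal. apply madd_comm. Qed.

Lemma lsum_morph {A} {X Y : NMod A} {L} (F : X -> Y) (g : L -> X) l :
  (forall x y, F (madd x y) = madd (F x) (F y)) ->
  F (lsum g l) = lsum (fun a => F (g a)) l.
Proof. intro HF. induction l; simpl. { apply morph_0; exact HF. }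
  rewrite HF, IHl. reflexivity. Qed.

Lemma lsum_zero {A} {M : NMod A} {L} (g : L -> M) l :
  (forall a, In a l -> g a = mzero) -> lsum g l = mzero.
Proof. induction l; simpl; intros; [reflexivity|]. rewrite H by auto. rewrite madd_0. auto. Qed.

Lemma lsum_app {A} {M : NMod A} {L} (g : L -> M) l1 l2 :
  lsum g (l1 ++ l2) = madd (lsum g l1) (lsum g l2).
Proof. induction l1; simpl. { rewrite madd_0; reflexivity. }
  rewrite IHl1, madd_assoc. reflexivity. Qed.

Lemma lsum_indep {A} {M : NMod A} {L} (l : list L) : forall (g : L -> M) l',
  NoDup l -> NoDup l' -> (forall a, ~ In a l -> g a = mzero) ->
  (forall a, ~ In a l' -> g a = mzero) -> lsum g l = lsum g l'.
Proof.
  induction l as [|a r IH]; intros g l' Hl Hl' H1 H2.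
  - simpl. symmetry. apply lsum_zero. intros b _. apply H1. simpl. tauto.
  - inversion Hl as [|a0 r0 Har Hr]; subst.
    destruct (classic (In a l')) as [Hin|Hnin].
    + destruct (in_split _ _ Hin) as [l1 [l2 Heq]]. subst l'.
      pose (g' := fun b => if excluded_middle_informative (b = a) then mzero else g b).
      assert (Hg'r : lsum g r = lsum g' r).
      { apply lsum_ext. intros b Hb. unfold g'. destruct (excluded_middle_informative (b = a)); [subst; contradiction|reflexivity]. }
      assert (Hn12 : ~ In a (l1 ++ l2)) by (apply (NoDup_remove_2 _ _ _ Hl')).
      assert (Hg'12 : lsum g (l1 ++ l2) = lsum g' (l1 ++ l2)).
      { apply lsum_ext. intros b Hb. unfold g'. destruct (excluded_middle_informative (b = a)); [subst; contradiction|reflexivity]. }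
      simpl. rewrite Hg'r.
      rewrite (IH g' (l1 ++ l2) Hr (NoDup_remove_1 _ _ _ Hl')).
      * rewrite <- Hg'12, !lsum_app. simpl. idtac.
        rewrite !madd_assoc. f_equal. apply madd_comm.
      * intros b Hb. unfold g'. destruct (excluded_middle_informative (b = a)); [reflexivity|].
        apply H1. simpl. intuition.
      * intros b Hb. unfold g'. destruct (excluded_middle_informative (b = a)); [reflexivity|].
        apply H2. intro Hc. apply Hb. apply in_app_or in Hc. apply in_or_app.
        simpl in Hc. destruct Hc as [Hc|[Hc|Hc]]; auto. congruence.
    + simpl. rewrite (H2 a Hnin), madd_0. apply IH; auto.
      intros b Hb. destruct (classic (b = a)); [subst; auto|]. apply H1. simpl. intuition.
Qed.

Definition rsum {L : Type} (g : L -> R) (l : list L) : R := fold_right Rplus 0 (map g l).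

Lemma lsum_norm {A} {M : NMod A} {L} (g : L -> M) l :
  mnorm (lsum g l) <= rsum (fun a => mnorm (g a)) l.
Proof. induction l; simpl. { rewrite mnorm_0. unfold rsum; simpl. lra. }
  eapply Rle_trans; [apply mnorm_triangle|]. unfold rsum in *; simpl. lra. Qed.

Lemma rsum_le {L} (f g : L -> R) l : (forall a, In a l -> f a <= g a) -> rsum f l <= rsum g l.
Proof. induction l as [|x l IH]; intro H; unfold rsum in *; simpl; [lra|].
  assert (H1 := H x (or_introl eq_refl)). assert (H2 := IH (fun b Hb => H b (or_intror Hb))). lra. Qed.

Lemma rsum_scal {L} (f : L -> R) c l : rsum (fun a => f a * c) l = rsum f l * c.
Proof. induction l; unfold rsum in *; simpl; [ring|]. rewrite IHl. ring. Qed.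

Lemma rsum_nonneg {L} (f : L -> R) l : (forall a, In a l -> 0 <= f a) -> 0 <= rsum f l.
Proof. induction l as [|x l IH]; intro H; unfold rsum in *; simpl; [lra|].
  assert (H1 := H x (or_introl eq_refl)). assert (H2 := IH (fun b Hb => H b (or_intror Hb))). lra. Qed.

Lemma rsum_zero {L} (f : L -> R) l : (forall a, In a l -> 0 <= f a) -> rsum f l = 0 ->
  forall a, In a l -> f a = 0.
Proof. induction l as [|x l IH]; intros H Hs a Ha; [contradiction|].
  assert (H2 := rsum_nonneg f l (fun b Hb => H b (or_intror Hb))).
  assert (H3 := H x (or_introl eq_refl)). unfold rsum in *; simpl in Hs.
  destruct Ha as [Ha|Ha]; [subst; lra|]. apply IH; [intros; apply H; simpl; auto | unfold rsum; lra | exact Ha]. Qed.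

Lemma list_max {L} (g : L -> R) (a : L) l : exists b, In b (a :: l) /\ forall c, In c (a :: l) -> g c <= g b.
Proof. induction l as [|x l IH].
  - exists a. split; [simpl; auto|]. intros c [Hc|[]]; subst; lra.
  - destruct IH as [b [Hb Hmax]]. destruct (Rle_dec (g x) (g b)).
    + exists b. split; [simpl in *; tauto|]. intros c [Hc|[Hc|Hc]]; subst; auto; try lra.
      apply Hmax; simpl; auto. apply Hmax; simpl; auto.
    + exists x. split; [simpl; auto|]. intros c [Hc|[Hc|Hc]]; subst; try lra.
      specialize (Hmax c (or_introl eq_refl)). lra.
      specialize (Hmax c (or_intror Hc)). lra.
Qed.

Lemma nodup_ex {L : Type} (l : list L) : exists l', NoDup l' /\ forall x, In x l <-> In x l'.
Proof. induction l as [|a l [l' [Hn Hi]]].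
  - exists nil. split; [constructor|]. tauto.
  - destruct (classic (In a l')).
    + exists l'. split; auto. intro x. simpl. rewrite Hi. intuition congruence.
    + exists (a :: l'). split; [constructor; auto|]. intro x. simpl. rewrite Hi. tauto.
Qed.

Fixpoint msum {A} {M : NMod A} (g : nat -> M) (N : nat) : M :=
  match N with O => mzero | S n => madd (msum g n) (g n) end.

Lemma msum_ext {A} {M : NMod A} (g h : nat -> M) N :
  (forall m, (m < N)%nat -> g m = h m) -> msum g N = msum h N.
Proof. induction N; simpl; intros; [reflexivity|]. rewrite IHN by (intros; apply H; lia). rewrite H by lia. reflexivity. Qed.

Lemma msum_add {A} {M : NMod A} (g h : nat -> M) N :
  msum (fun m => madd (g m) (h m)) N = madd (msum g N) (msum h N).
Proof. induction N; simpl. { rewrite madd_0; reflexivity. }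
  rewrite IHN. rewrite !madd_assoc. f_equal.
  rewrite <- !madd_assoc. f_equal. apply madd_comm. Qed.

Lemma msum_morph {A} {X Y : NMod A} (F : X -> Y) (g : nat -> X) N :
  (forall x y, F (madd x y) = madd (F x) (F y)) ->
  F (msum g N) = msum (fun m => F (g m)) N.
Proof. intro HF. induction N; simpl. { apply morph_0; exact HF. }
  rewrite HF, IHN. reflexivity. Qed.

Lemma msum_tail {A} {M : NMod A} (g : nat -> M) N0 N :
  (forall m, (N0 <= m)%nat -> g m = mzero) -> (N0 <= N)%nat -> msum g N = msum g N0.
Proof. intros H HN. induction HN; [reflexivity|]. simpl. rewrite H by lia. rewrite madd_0r. auto. Qed.

Lemma msum_delta {A} {M : NMod A} (v : M) k N :
  msum (fun m => if Nat.eqb m k then v else mzero) N = if Nat.ltb k N then v else mzero.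
Proof. induction N; simpl; [reflexivity|]. rewrite IHN.
  destruct (Nat.eqb_spec N k), (Nat.ltb_spec k N), (Nat.ltb_spec k (S N)); try lia;
  try rewrite madd_0; try rewrite madd_0r; reflexivity. Qed.

Lemma morph_scal_real {A} {X Y : NMod A} (f : X -> Y) : is_morph f -> f mzero = mzero.
Proof. intros [H _]. apply morph_0; exact H. Qed.

Lemma opnorm_bound {A} {X Y : NMod A} (f : X -> Y) r : is_morph f -> opnorm f r ->
  forall x, mnorm (f x) <= r * mnorm x.
Proof.
  intros Hf [Hub Hlub] x. destruct Hf as [Hadd [Hsc _]].
  assert (Hr : 0 <= r). { apply Hub. exists mzero. rewrite mnorm_0, (morph_0 f Hadd), mnorm_0. split; lra. }
  destruct (Req_dec (mnorm x) 0) as [H0|H0].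
  - apply mnorm_zero in H0. subst. rewrite (morph_0 f Hadd), mnorm_0. rewrite mnorm_0. lra.
  - assert (Hp : 0 < mnorm x) by (pose proof (mnorm_nonneg _ _ x); lra).
    assert (Ht := Hub (mnorm (f (mscal (mkC (/ mnorm x) 0) x)))).
    rewrite Hsc, mnorm_scal, Cmod_real, Rabs_right in Ht by (left; apply Rinv_0_lt_compat; lra).
    assert (Hle : / mnorm x * mnorm (f x) <= r).
    { apply Ht. exists (mscal (mkC (/ mnorm x) 0) x). split; [|rewrite Hsc, mnorm_scal, Cmod_real, Rabs_right; [reflexivity|left; apply Rinv_0_lt_compat; lra]].
      rewrite mnorm_scal, Cmod_real, Rabs_right by (left; apply Rinv_0_lt_compat; lra).
      rewrite Rinv_l; lra. }
    apply (Rmult_le_compat_l (mnorm x)) in Hle; [|lra].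
    rewrite <- Rmult_assoc, Rinv_r in Hle; lra.
Qed.

Lemma opnorm_ex {A} {X Y : NMod A} (f : X -> Y) : is_morph f -> exists r, opnorm f r.
Proof.
  intro Hf. pose proof Hf as [Hadd [_ [_ [M HM]]]].
  destruct (completeness (fun t => exists x, mnorm x <= 1 /\ t = mnorm (f x))) as [r Hr].
  - exists (Rmax M 0). intros t [x [Hx Ht]]. subst. eapply Rle_trans; [apply HM|].
    pose proof (mnorm_nonneg _ _ x). destruct (Rle_dec 0 M).
    + rewrite Rmax_left by lra. apply Rle_trans with (M * 1); [apply Rmult_le_compat_l|]; lra.
    + rewrite Rmax_right by lra. nra.
  - exists (mnorm (f mzero)). exists mzero. rewrite mnorm_0. split; [lra|reflexivity].
  - exists r. exact Hr.
Qed.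

Lemma opnorm_le {A} {X Y : NMod A} (f : X -> Y) r K : opnorm f r -> 0 <= K ->
  (forall x, mnorm (f x) <= K * mnorm x) -> r <= K.
Proof. intros [_ Hlub] HK H. apply Hlub. intros t [x [Hx Ht]]. subst.
  eapply Rle_trans; [apply H|]. apply Rle_trans with (K * 1); [apply Rmult_le_compat_l|]; lra. Qed.

Definition isoT {A} (X : NMod A) (Yp : X -> Prop) (L : Type) (T : (L -> C) -> X) : Prop :=
    (forall f, finsupp f -> Yp (T f)) /\
    (forall f g, finsupp f -> finsupp g ->
        T (fun i => Cadd (f i) (g i)) = madd (T f) (T g)) /\
    (forall c f, finsupp f -> T (fun i => Cmul c (f i)) = mscal c (T f)) /\
    (forall f r, finsupp f -> l1norm f r -> mnorm (T f) = r) /\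
    (forall y, Yp y -> exists f, finsupp f /\ T f = y).

Definition cover {L} (f : L -> C) (l : list L) := forall i, f i <> C0 -> In i l.

Definition dl {L} (a : L) : L -> C := fun i => if excluded_middle_informative (i = a) then C1 else C0.

Lemma finsupp_nodup {L} (f : L -> C) : finsupp f -> exists l, NoDup l /\ cover f l.
Proof. intros [l Hl]. destruct (nodup_ex l) as [l' [Hn Hi]]. exists l'. split; auto.
  intros i Hi'. apply Hi. auto. Qed.

Lemma cover_finsupp {L} (f : L -> C) l : cover f l -> finsupp f.
Proof. intro H. exists l. exact H. Qed.

Lemma dl_finsupp {L} (a : L) : finsupp (dl a).
Proof. exists (a :: nil). intros i Hi. unfold dl in Hi.
  destruct (excluded_middle_informative (i = a)); [subst; simpl; auto|congruence]. Qed.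

Lemma zero_finsupp {L} : finsupp (fun _ : L => C0).
Proof. exists nil. intros i H. congruence. Qed.

Lemma T_zero {A} {X : NMod A} {Yp L T} : @isoT A X Yp L T -> T (fun _ => C0) = mzero.
Proof. intros [_ [_ [Hs _]]].
  assert (H := Hs C0 (fun _ => C0) zero_finsupp).
  rewrite <- (mscal_C0 (T (fun _ => C0))), <- H. f_equal.
  apply functional_extensionality; intro; ceq. Qed.

Lemma T_norm_list {A} {X : NMod A} {Yp L T} : @isoT A X Yp L T ->
  forall f l, NoDup l -> cover f l -> mnorm (T f) = rsum (fun i => Cmod (f i)) l.
Proof. intros [_ [_ [_ [Hn _]]]] f l Hl Hc. apply Hn. exact (cover_finsupp f l Hc).
  exists l. split; [auto|split; auto]. Qed.

Lemma T_inj {A} {X : NMod A} {Yp L T} : @isoT A X Yp L T ->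
  forall f g, finsupp f -> finsupp g -> T f = T g -> forall i, f i = g i.
Proof.
  intros HT f g Hf Hg Heq.
  pose proof HT as [_ [Ha [Hs _]]].
  pose (h := fun i => Cadd (f i) (Cmul (mkC (-1) 0) (g i))).
  assert (Hh : finsupp h).
  { destruct Hf as [l1 H1], Hg as [l2 H2]. exists (l1 ++ l2). intros i Hi. apply in_or_app.
    destruct (classic (f i = C0)) as [E|E]; [|auto]. right. apply H2. intro E2. apply Hi.
    unfold h. rewrite E, E2. ceq. }
  assert (Hgh : (fun i => Cadd (g i) (h i)) = f).
  { apply functional_extensionality. intro i. unfold h. ceq. }
  assert (HTh : T h = mzero).
  { apply (add_cancel (T g)). rewrite <- Ha by auto. rewrite Hgh, madd_0r. auto. }
  destruct (finsupp_nodup h Hh) as [l [Hl Hc]].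
  assert (Hn := T_norm_list HT h l Hl Hc). rewrite HTh, mnorm_0 in Hn.
  intro i. assert (Hi : h i = C0).
  { destruct (classic (h i = C0)) as [E|E]; auto.
    apply Cmod_eq0. symmetry in Hn.
    apply (rsum_zero (fun i => Cmod (h i)) l); [intros; apply Cmod_nonneg | exact Hn | apply Hc; auto]. }
  rewrite <- Hgh. rewrite Hi. ceq.
Qed.

Lemma T_decomp {A} {X : NMod A} {Yp L T} : @isoT A X Yp L T ->
  forall l f, NoDup l -> cover f l -> T f = lsum (fun i => mscal (f i) (T (dl i))) l.
Proof.
  intros HT. pose proof HT as [_ [Ha [Hs _]]].
  induction l as [|a r IH]; intros f Hl Hc.
  - simpl. replace f with (fun _ : L => C0). apply (T_zero HT).
    apply functional_extensionality. intro i. destruct (classic (f i = C0)); auto.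
    exfalso. apply (Hc i). auto.
  - inversion Hl as [|a0 r0 Har Hr]; subst.
    pose (f' := fun i => if excluded_middle_informative (i = a) then C0 else f i).
    assert (Hc' : cover f' r).
    { intros i Hi. unfold f' in Hi. destruct (excluded_middle_informative (i = a)); [congruence|].
      destruct (Hc i Hi); [congruence|auto]. }
    assert (Hf : f = fun i => Cadd (Cmul (f a) (dl a i)) (f' i)).
    { apply functional_extensionality. intro i. unfold f', dl.
      destruct (excluded_middle_informative (i = a)); [subst; ceq|ceq]. }
    rewrite Hf at 1. rewrite Ha.
    + rewrite Hs by apply dl_finsupp. simpl. f_equal. rewrite (IH f' Hr Hc').
      apply lsum_ext. intros b Hb. unfold f'.
      destruct (excluded_middle_informative (b = a)); [subst; contradiction|reflexivity].
    + destruct (dl_finsupp a) as [l0 H0]. exists l0. intros i Hi. apply H0. intro E. apply Hi.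
      rewrite E. ceq.
    + exact (cover_finsupp _ _ Hc').
Qed.

Lemma T_dl_norm {A} {X : NMod A} {Yp L T} : @isoT A X Yp L T -> forall a, mnorm (T (dl a)) = 1.
Proof. intros HT a. rewrite (T_norm_list HT (dl a) (a :: nil)).
  - unfold rsum, dl; simpl. destruct (excluded_middle_informative (a = a)); [|congruence].
    rewrite Cmod_C1. ring.
  - constructor; [simpl; auto|constructor].
  - intros i Hi. unfold dl in Hi. destruct (excluded_middle_informative (i = a)); [subst; simpl; auto|congruence].
Qed.

Lemma coord_lemma {A} (P X Y : NMod A) (tau : Y -> X) (phi : P -> X) (m : nat) (L : Type)
  (T : (L -> C) -> P) (delta : R) :
  coisometric tau -> is_morph phi -> 0 < delta -> isoT P (coord_sub P m) L T ->
  exists psi : P -> Y,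
    (forall z1 z2, coord_sub P m z1 -> coord_sub P m z2 -> psi (madd z1 z2) = madd (psi z1) (psi z2)) /\
    (forall c z, coord_sub P m z -> psi (mscal c z) = mscal c (psi z)) /\
    (forall z, act (pvec m) (psi z) = psi z) /\
    (forall z, coord_sub P m z -> tau (psi z) = phi z) /\
    (forall z, coord_sub P m z -> exists u, coord_sub P m u /\ mnorm u = mnorm z /\
        mnorm (psi z) <= (1 + delta) * mnorm (phi u)).
Proof.
  intros Htau Hphi Hd HT.
  destruct Htau as [[tadd [tsc [tact _]]] [_ Hlift]].
  destruct Hphi as [padd [psc [pact _]]].
  pose proof HT as [HT1 [HTa [HTs [HTn HTsurj]]]].
  assert (Hy : forall a : L, exists y : Y, tau y = phi (T (dl a)) /\ act (pvec m) y = y /\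
              mnorm y <= (1+delta) * mnorm (phi (T (dl a)))).
  { intro a. destruct (HT1 (dl a) (dl_finsupp a)) as [w Hw].
    assert (He : act (pvec m) (T (dl a)) = T (dl a)) by (rewrite Hw; apply pp_same).
    destruct (Req_dec (mnorm (phi (T (dl a)))) 0) as [H0|H0].
    - exists mzero. rewrite H0. split; [|split].
      + apply mnorm_zero in H0. rewrite H0. apply (morph_0 tau tadd).
      + apply act_0, pvec_in.
      + rewrite mnorm_0. lra.
    - assert (Hp : 0 < mnorm (phi (T (dl a)))) by (pose proof (mnorm_nonneg _ _ (phi (T (dl a)))); lra).
      destruct (Hlift (phi (T (dl a))) (delta * mnorm (phi (T (dl a))))) as [y0 [Hy0 Hn0]].
      { apply Rmult_lt_0_compat; lra. }
      exists (act (pvec m) y0). split; [|split].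
      + rewrite tact by apply pvec_in. rewrite Hy0, <- pact by apply pvec_in. rewrite He. reflexivity.
      + apply pp_same.
      + eapply Rle_trans; [apply pnorm|]. lra. }
  pose (yl := fun a => proj1_sig (constructive_indefinite_description _ (Hy a))).
  assert (Hyl : forall a, tau (yl a) = phi (T (dl a)) /\ act (pvec m) (yl a) = yl a /\
              mnorm (yl a) <= (1+delta) * mnorm (phi (T (dl a)))).
  { intro a. exact (proj2_sig (constructive_indefinite_description _ (Hy a))). }
  clearbody yl.
  assert (Hrep : forall z, exists fl : (L -> C) * list L, coord_sub P m z ->
             T (fst fl) = z /\ NoDup (snd fl) /\ cover (fst fl) (snd fl)).
  { intro z. destruct (classic (coord_sub P m z)) as [Hz|Hz].
    - destruct (HTsurj z Hz) as [f [Hf HTf]]. destruct (finsupp_nodup f Hf) as [l [Hl Hc]].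
      exists (f, l). intros _. auto.
    - exists ((fun _ => C0), nil). intro; contradiction. }
  pose (rep := fun z => proj1_sig (constructive_indefinite_description _ (Hrep z))).
  assert (Hr : forall z, coord_sub P m z ->
             T (fst (rep z)) = z /\ NoDup (snd (rep z)) /\ cover (fst (rep z)) (snd (rep z))).
  { intro z. exact (proj2_sig (constructive_indefinite_description _ (Hrep z))). }
  clearbody rep.
  pose (S := fun (f : L -> C) l => lsum (fun a => mscal (f a) (yl a)) l).
  assert (S_indep : forall f l l', NoDup l -> NoDup l' -> cover f l -> cover f l' -> S f l = S f l').
  { intros f l l' Hl Hl' Hc Hc'. apply lsum_indep; auto.
    - intros a Ha. destruct (classic (f a = C0)) as [E|E]; [rewrite E; apply mscal_C0|].
      exfalso. auto.
    - intros a Ha. destruct (classic (f a = C0)) as [E|E]; [rewrite E; apply mscal_C0|].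
      exfalso. auto. }
  exists (fun z => S (fst (rep z)) (snd (rep z))).
  split; [|split; [|split; [|split]]].
  -
    intros z1 z2 H1 H2.
    assert (H12 : coord_sub P m (madd z1 z2)).
    { destruct H1 as [x1 E1], H2 as [x2 E2]. exists (madd x1 x2).
      rewrite act_addr by apply pvec_in. subst; reflexivity. }
    destruct (Hr _ H1) as [T1 [N1 C1']], (Hr _ H2) as [T2 [N2 C2']], (Hr _ H12) as [T3 [N3 C3']].
    set (f1 := fst (rep z1)) in *. set (f2 := fst (rep z2)) in *. set (f3 := fst (rep (madd z1 z2))) in *.
    set (l1 := snd (rep z1)) in *. set (l2 := snd (rep z2)) in *. set (l3 := snd (rep (madd z1 z2))) in *.
    assert (Hf3 : f3 = fun i => Cadd (f1 i) (f2 i)).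
    { apply functional_extensionality. apply (T_inj HT).
      - exact (cover_finsupp _ _ C3').
      - exists (l1 ++ l2). intros i Hi. apply in_or_app.
        destruct (classic (f1 i = C0)) as [E|E]; [|left; auto]. right. apply C2'. intro E2. apply Hi.
        rewrite E, E2. ceq.
      - rewrite HTa by (eapply cover_finsupp; eauto). congruence. }
    destruct (nodup_ex (l1 ++ l2 ++ l3)) as [La [NLa HLa]].
    assert (Ca1 : cover f1 La) by (intros i Hi; apply HLa; apply in_or_app; left; auto).
    assert (Ca2 : cover f2 La) by (intros i Hi; apply HLa; apply in_or_app; right; apply in_or_app; left; auto).
    assert (Ca3 : cover f3 La) by (intros i Hi; apply HLa; apply in_or_app; right; apply in_or_app; right; auto).
    rewrite (S_indep f3 l3 La) by auto.
    rewrite (S_indep f1 l1 La) by auto.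
    rewrite (S_indep f2 l2 La) by auto.
    unfold S. rewrite <- lsum_add. apply lsum_ext. intros a _. rewrite Hf3. apply mscal_addl.
  -
    intros c z Hz.
    assert (Hcz : coord_sub P m (mscal c z)).
    { destruct Hz as [x E]. exists (mscal c x). rewrite act_scalr by apply pvec_in. subst; reflexivity. }
    destruct (Hr _ Hz) as [T1 [N1 C1']], (Hr _ Hcz) as [T2 [N2 C2']].
    set (f1 := fst (rep z)) in *. set (f2 := fst (rep (mscal c z))) in *.
    set (l1 := snd (rep z)) in *. set (l2 := snd (rep (mscal c z))) in *.
    assert (Hf2 : f2 = fun i => Cmul c (f1 i)).
    { apply functional_extensionality. apply (T_inj HT).
      - exact (cover_finsupp _ _ C2').
      - exists l1. intros i Hi. apply C1'. intro E. apply Hi. rewrite E. ceq.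
      - rewrite HTs by (eapply cover_finsupp; eauto). congruence. }
    rewrite (S_indep f2 l2 l1); auto.
    + unfold S. rewrite (lsum_morph (mscal c)) by apply mscal_addr.
      apply lsum_ext. intros a _. rewrite Hf2, mscal_mul. reflexivity.
    + rewrite Hf2. intros i Hi. apply C1'. intro E. apply Hi. rewrite E. ceq.
  -
    intro z. unfold S. rewrite (lsum_morph (act (pvec m))) by (intros; apply act_addr, pvec_in).
    apply lsum_ext. intros a _. rewrite act_scalr by apply pvec_in. f_equal. apply Hyl.
  -
    intros z Hz. destruct (Hr _ Hz) as [T1 [N1 C1']].
    unfold S. rewrite (lsum_morph tau) by exact tadd.
    rewrite <- T1 at 2. rewrite (T_decomp HT _ _ N1 C1').
    rewrite (lsum_morph phi) by exact padd.
    apply lsum_ext. intros a _. rewrite tsc, psc. f_equal. apply Hyl.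
  -
    intros z Hz. destruct (Hr _ Hz) as [T1 [N1 C1']].
    set (f := fst (rep z)) in *. set (l := snd (rep z)) in *. clearbody f l.
    assert (Hnz : mnorm z = rsum (fun i => Cmod (f i)) l).
    { rewrite <- T1. apply (T_norm_list HT); auto. }
    destruct l as [|a l0].
    + exists mzero. split; [|split].
      * exists mzero. symmetry. apply act_0, pvec_in.
      * rewrite Hnz, mnorm_0. reflexivity.
      * unfold S. simpl. rewrite mnorm_0. apply Rmult_le_pos; [lra|apply mnorm_nonneg].
    + destruct (list_max (fun b => mnorm (yl b)) a l0) as [b [Hb Hmax]].
      destruct (HT1 (dl b) (dl_finsupp b)) as [w Hw].
      assert (Hzn : 0 <= mnorm z) by apply mnorm_nonneg.
      exists (mscal (mkC (mnorm z) 0) (T (dl b))). split; [|split].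
      * exists (mscal (mkC (mnorm z) 0) w). rewrite Hw, act_scalr by apply pvec_in. reflexivity.
      * rewrite mnorm_scal, Cmod_real, Rabs_right, (T_dl_norm HT) by lra. ring.
      * rewrite psc, mnorm_scal, Cmod_real, Rabs_right by lra.
        eapply Rle_trans; [apply lsum_norm|].
        apply Rle_trans with (rsum (fun i => Cmod (f i) * mnorm (yl b)) (a :: l0)).
        { apply rsum_le. intros i Hi. rewrite mnorm_scal. apply Rmult_le_compat_l; [apply Cmod_nonneg|].
          apply Hmax. exact Hi. }
        rewrite rsum_scal, <- Hnz.
        destruct (Hyl b) as [_ [_ Hyb]].
        apply Rle_trans with (mnorm z * ((1 + delta) * mnorm (phi (T (dl b))))).
        { apply Rmult_le_compat_l; auto. }
        right. ring.
Qed.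

Theorem theorem3p1 (A : SeqAlg) (P : NMod A) :
  homogeneous P -> finite_type P ->
  (forall n : nat, exists L : Type, iso_l10 P (coord_sub P n) L) ->
  extremely_projective (@cat_H A) P.
Proof.
  intros HhP HfP Hiso X Y _ [_ HhY] tau Htau phi Hphi eps Heps.
  destruct (opnorm_ex phi Hphi) as [R0 HR0].
  assert (HR0p : 0 <= R0).
  { apply (proj1 HR0). exists mzero. rewrite (morph_scal_real phi Hphi). rewrite !mnorm_0. split; lra. }
  set (delta := eps / (2 * (R0 + 1))).
  assert (Hd : 0 < delta) by (unfold delta; apply Rdiv_lt_0_compat; lra).
  assert (HdR : delta * R0 < eps).
  { assert (E : delta * (2 * (R0 + 1)) = eps) by (unfold delta; field; lra). nra. }
  assert (Hm : forall m, exists psi : P -> Y,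
    (forall z1 z2, coord_sub P m z1 -> coord_sub P m z2 -> psi (madd z1 z2) = madd (psi z1) (psi z2)) /\
    (forall c z, coord_sub P m z -> psi (mscal c z) = mscal c (psi z)) /\
    (forall z, act (pvec m) (psi z) = psi z) /\
    (forall z, coord_sub P m z -> tau (psi z) = phi z) /\
    (forall z, coord_sub P m z -> exists u, coord_sub P m u /\ mnorm u = mnorm z /\
        mnorm (psi z) <= (1 + delta) * mnorm (phi u))).
  { intro m. destruct (Hiso m) as [L [T HT]]. exact (coord_lemma P X Y tau phi m L T delta Htau Hphi Hd HT). }
  pose (Psi := fun m => proj1_sig (constructive_indefinite_description _ (Hm m))).
  assert (HPsi : forall m,
    (forall z1 z2, coord_sub P m z1 -> coord_sub P m z2 -> Psi m (madd z1 z2) = madd (Psi m z1) (Psi m z2)) /\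
    (forall c z, coord_sub P m z -> Psi m (mscal c z) = mscal c (Psi m z)) /\
    (forall z, act (pvec m) (Psi m z) = Psi m z) /\
    (forall z, coord_sub P m z -> tau (Psi m z) = phi z) /\
    (forall z, coord_sub P m z -> exists u, coord_sub P m u /\ mnorm u = mnorm z /\
        mnorm (Psi m z) <= (1 + delta) * mnorm (phi u))).
  { intro m. exact (proj2_sig (constructive_indefinite_description _ (Hm m))). }
  clearbody Psi.
  pose (Nx := fun x => proj1_sig (constructive_indefinite_description _ (HfP x))).
  assert (HNx : forall x n, (Nx x <= n)%nat -> act (pvec n) x = mzero).
  { intro x. exact (proj2_sig (constructive_indefinite_description _ (HfP x))). }
  clearbody Nx.
  destruct Htau as [Htm [[rt [Hrt Hrt1]] Hlift]].
  pose proof Htm as [tadd [tsc [tact _]]].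
  pose proof Hphi as [padd [psc [pact _]]].
  assert (Hcontr : forall y, mnorm (tau y) <= mnorm y).
  { intro y. pose proof (opnorm_bound tau rt Htm Hrt y). pose proof (mnorm_nonneg _ _ y). nra. }
  assert (Hcz : forall m x, coord_sub P m (act (pvec m) x)) by (intros m x; exists x; reflexivity).
  assert (Psi0 : forall m, Psi m mzero = mzero).
  { intro m. apply self_zero. destruct (HPsi m) as [Ha _].
    rewrite <- Ha; [rewrite madd_0; reflexivity| |]; exists mzero; symmetry; apply act_0, pvec_in. }
  pose (psi := fun x => msum (fun m => Psi m (act (pvec m) x)) (Nx x)).
  assert (psi_eq : forall x N, (forall n, (N <= n)%nat -> act (pvec n) x = mzero) ->
            psi x = msum (fun m => Psi m (act (pvec m) x)) N).
  { intros x N HN. unfold psi. destruct (Nat.le_ge_cases N (Nx x)) as [Hle|Hle].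
    - apply msum_tail with (N0 := N); auto. intros m Hm'. rewrite HN by auto. apply Psi0.
    - symmetry. apply msum_tail with (N0 := Nx x); auto. intros m Hm'. rewrite HNx by auto. apply Psi0. }
  assert (Hcoord : forall k x, act (pvec k) (psi x) = Psi k (act (pvec k) x)).
  { intros k x. unfold psi. rewrite (msum_morph (act (pvec k))) by (intros; apply act_addr, pvec_in).
    rewrite (msum_ext _ (fun m => if Nat.eqb m k then Psi k (act (pvec k) x) else mzero)).
    - rewrite msum_delta. destruct (Nat.ltb_spec k (Nx x)); [reflexivity|].
      rewrite HNx by lia. symmetry; apply Psi0.
    - intros m _. destruct (Nat.eqb_spec m k).
      + subst. apply (HPsi k).
      + destruct (HPsi m) as [_ [_ [Hc _]]]. rewrite <- Hc. apply pp_diff. auto. }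
  assert (Hsum : forall x, msum (fun m => act (pvec m) x) (Nx x) = x).
  { intro x. apply homog_eq; auto. intro k.
    rewrite (msum_morph (act (pvec k))) by (intros; apply act_addr, pvec_in).
    rewrite (msum_ext _ (fun m => if Nat.eqb m k then act (pvec k) x else mzero)).
    - rewrite msum_delta. destruct (Nat.ltb_spec k (Nx x)); [reflexivity|].
      rewrite HNx by lia. reflexivity.
    - intros m _. destruct (Nat.eqb_spec m k).
      + subst. apply pp_same.
      + apply pp_diff. auto. }
  assert (Hlifts : forall x, tau (psi x) = phi x).
  { intro x. unfold psi. rewrite (msum_morph tau) by exact tadd.
    rewrite <- (Hsum x) at 2. rewrite (msum_morph phi) by exact padd.
    apply msum_ext. intros m _. apply (HPsi m). apply Hcz. }
  assert (Hbound : forall x, mnorm (psi x) <= (1 + delta) * R0 * mnorm x).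
  { intro x.
    assert (HK : forall K, exists u, (forall k, (k < K)%nat ->
               mnorm (act (pvec k) u) = mnorm (act (pvec k) x) /\
               mnorm (act (pvec k) (psi x)) <= (1 + delta) * mnorm (act (pvec k) (phi u))) /\
             (forall k, (K <= k)%nat -> act (pvec k) u = mzero)).
    { induction K as [|K [u [H1 H2]]].
      - exists mzero. split; [intros; lia|]. intros. apply act_0, pvec_in.
      - destruct (HPsi K) as [_ [_ [_ [_ Hv]]]].
        destruct (Hv (act (pvec K) x) (Hcz K x)) as [uK [[w Hw] [HnK HbK]]].
        assert (HuK : forall k, act (pvec k) uK = if Nat.eqb k K then uK else mzero).
        { intro k. rewrite Hw. destruct (Nat.eqb_spec k K); [subst; apply pp_same|apply pp_diff; auto]. }
        exists (madd u uK). split.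
        + intros k Hk. rewrite act_addr by apply pvec_in. rewrite HuK.
          rewrite <- pact by apply pvec_in. rewrite act_addr by apply pvec_in. rewrite HuK.
          destruct (Nat.eqb_spec k K).
          * subst. rewrite H2 by lia. rewrite madd_0. split; auto. rewrite Hcoord. exact HbK.
          * rewrite madd_0r. destruct (H1 k) as [Ha Hb]; [lia|]. split; auto.
            rewrite pact by apply pvec_in. exact Hb.
        + intros k Hk. rewrite act_addr by apply pvec_in. rewrite HuK, H2 by lia.
          destruct (Nat.eqb_spec k K); [lia|]. apply madd_0. }
    destruct (HK (Nx x)) as [u [H1 H2]].
    assert (Hall : forall k, mnorm (act (pvec k) u) = mnorm (act (pvec k) x) /\
               mnorm (act (pvec k) (psi x)) <= (1 + delta) * mnorm (act (pvec k) (phi u))).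
    { intro k. destruct (Nat.lt_ge_cases k (Nx x)) as [Hk|Hk]; auto.
      rewrite H2, HNx, Hcoord, HNx, Psi0, !mnorm_0 by auto. split; auto.
      apply Rmult_le_pos; [lra|apply mnorm_nonneg]. }
    assert (Hun : mnorm u = mnorm x).
    { apply Rle_antisym; apply HhP; intro k; rewrite (proj1 (Hall k)); apply Rle_refl. }
    assert (Hd' : forall d, 0 < d -> mnorm (psi x) <= (1 + delta) * (R0 * mnorm x + d)).
    { intros d Hdp. destruct (Hlift (phi u) d Hdp) as [v [Hv Hvn]].
      assert (Hpv : mnorm (psi x) <= mnorm (mscal (mkC (1 + delta) 0) v)).
      { apply HhY. intro k. rewrite act_scalr by apply pvec_in.
        rewrite mnorm_scal, Cmod_real, Rabs_right by lra.
        eapply Rle_trans; [apply (proj2 (Hall k))|]. apply Rmult_le_compat_l; [lra|].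
        rewrite <- Hv, <- tact by apply pvec_in. apply Hcontr. }
      rewrite mnorm_scal, Cmod_real, Rabs_right in Hpv by lra.
      pose proof (opnorm_bound phi R0 Hphi HR0 u). rewrite Hun in H.
      eapply Rle_trans; [exact Hpv|]. apply Rmult_le_compat_l; lra. }
    destruct (Rle_dec (mnorm (psi x)) ((1 + delta) * R0 * mnorm x)) as [Hle|Hgt]; auto.
    exfalso. set (B := (1 + delta) * R0 * mnorm x) in *.
    set (d := (mnorm (psi x) - B) / (2 * (1 + delta))).
    assert (Hdp : 0 < d) by (unfold d; apply Rdiv_lt_0_compat; lra).
    specialize (Hd' d Hdp).
    assert (E : (1 + delta) * (R0 * mnorm x + d) = B + (mnorm (psi x) - B) / 2)
      by (unfold d, B; field; lra).
    lra. }
  assert (Hpsim : is_morph psi).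
  { split; [|split; [|split]].
    - intros x y. set (N := Nat.max (Nx x) (Nx y)).
      rewrite (psi_eq (madd x y) N), (psi_eq x N), (psi_eq y N).
      + rewrite <- msum_add. apply msum_ext. intros m _. rewrite act_addr by apply pvec_in.
        apply (HPsi m); apply Hcz.
      + intros n Hn. apply HNx. lia.
      + intros n Hn. apply HNx. lia.
      + intros n Hn. rewrite act_addr by apply pvec_in. rewrite !HNx by lia. apply madd_0.
    - intros c x. rewrite (psi_eq (mscal c x) (Nx x)).
      + unfold psi. rewrite (msum_morph (mscal c)) by apply mscal_addr. apply msum_ext.
        intros m _. rewrite act_scalr by apply pvec_in. apply (HPsi m). apply Hcz.
      + intros n Hn. rewrite act_scalr by apply pvec_in. rewrite HNx by lia. apply mscal_0.
    - intros a x Ha. rewrite (psi_eq (act a x) (Nx x)).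
      + unfold psi. rewrite (msum_morph (act a)) by (intros; apply act_addr; auto). apply msum_ext.
        intros m _. rewrite p_a by auto. destruct (HPsi m) as [_ [Hs [Hc _]]].
        rewrite Hs by apply Hcz. rewrite <- Hc, a_p by auto. rewrite Hc. reflexivity.
      + intros n Hn. rewrite p_a by auto. rewrite HNx by lia. apply mscal_0.
    - exists ((1 + delta) * R0). exact Hbound. }
  exists psi. split; [exact Hpsim|split; [exact Hlifts|]].
  intros r Hr. destruct (opnorm_ex psi Hpsim) as [r' Hr']. exists r'. split; auto.
  assert (Er : r = R0).
  { apply Rle_antisym; [apply (proj2 Hr); apply (proj1 HR0)|apply (proj2 HR0); apply (proj1 Hr)]. }
  subst r.
  assert (Hle : r' <= (1 + delta) * R0).
  { apply (opnorm_le psi r'); auto. apply Rmult_le_pos; lra. }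
  lra.
Qed.
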